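(* Let $(\Delta,\mathcal H)$ be a generic cut with associated simplicial complexes $K_\Delta,K_+,K_-$ on $\widetilde{[m]}=[m]\cup\{o\}$. For $\sigma\subset\widetilde{[m]}$ let $F_\sigma=\bigcap_{i\in\sigma}H_i$, and let $Z=\{\sigma\subset\widetilde{[m]}: F_\sigma\neq\varnothing\text{ and }F_\sigma\subset\Delta_+\setminus H_o\}$. Then $$K_+\cap K_\Delta=\overline Z,\qquad (K_+\cup K_\Delta)\setminus K_-=Z.$$
   Context: Let $\Delta\subset\mathbb R^n$ be an $n$-dimensional simple polytope $\Delta=\{x:\langle x,\lambda_i\rangle+\eta_i\ge0,\ i=1,\dots,m\}$ whose facets $H_i=\Delta\cap\{\langle x,\lambda_i\rangle+\eta_i=0\}$ are all nonempty. A generic cut is a hyperplane $\mathcal H=\{\langle x,\lambda_0\rangle+\xi=0\}$ in general position with the hyperplanes $\{\langle x,\lambda_i\rangle+\eta_i=0\}$ and with $H_o:=\mathcal H\cap\Delta\neq\varnothing$ (so $H_o$ is the facet indexed by $o$). Set $\Delta_\pm=\Delta\cap\{\pm(\langle x,\lambda_0\rangle+\xi)\ge0\}$, $K_\Delta=\{\sigma\subset[m]:\bigcap_{i\in\sigma}H_i\ne\varnothing\}\cup\{\varnothing\}$, $K_\pm=\{\sigma\subset\widetilde{[m]}:\bigcap_{i\in\sigma}(H_i\cap\Delta_\pm)\ne\varnothing\}\cup\{\varnothing\}$. $\overline Z$ denotes the smallest simplicial complex containing $Z$ (all subsets of members of $Z$). *)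

(* Defs.v *)
From HB Require Import structures.
From mathcomp Require Import all_boot all_order all_algebra.
Set Implicit Arguments. Unset Strict Implicit. Unset Printing Implicit Defensive.
Import Order.TTheory GRing.Theory Num.Theory.
Local Open Scope ring_scope.

Section Cut.
Variables (R : realFieldType) (n m : nat).
Variables (lam : 'I_m -> 'rV[R]_n) (eta : 'I_m -> R).
Variables (lam0 : 'rV[R]_n) (xi : R).

Definition dotp (x y : 'rV[R]_n) : R := \sum_(k < n) x 0 k * y 0 k.

Definition ineq (i : 'I_m) (x : 'rV[R]_n) : R := dotp x (lam i) + eta i.
Definition cutf (x : 'rV[R]_n) : R := dotp x lam0 + xi.

Definition Delta (x : 'rV[R]_n) : Prop := forall i, 0 <= ineq i x.

Definition H (i : 'I_m) (x : 'rV[R]_n) : Prop := Delta x /\ ineq i x = 0.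

Definition bounded : Prop :=
  exists M : R, forall x, Delta x -> forall k, `|x 0 k| <= M.

Definition full_dim : Prop :=
  exists x : 'rV[R]_n, exists e : R, 0 < e /\
    forall y : 'rV[R]_n, (forall k, `|y 0 k - x 0 k| < e) -> Delta y.

Definition vertex (v : 'rV[R]_n) : Prop :=
  Delta v /\ forall y z, Delta y -> Delta z -> v = 2^-1 *: (y + z) -> y = z.

Definition simple : Prop :=
  forall v, vertex v -> #|[set i : 'I_m | ineq i v == 0]| = n.

Definition simple_polytope : Prop := bounded /\ full_dim /\ simple.

Definition facets_nonempty : Prop := forall i, exists x, H i x.

Definition cut_general_position : Prop :=
  forall x : 'rV[R]_n, cutf x = 0 ->
    ~ exists c : 'I_m -> R,
        lam0 = \sum_(i < m | ineq i x == 0) c i *: lam i.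

Definition Ho (x : 'rV[R]_n) : Prop := Delta x /\ cutf x = 0.

Definition generic_cut : Prop :=
  cut_general_position /\ exists x, Ho x.

Definition Delta_plus (x : 'rV[R]_n) : Prop := Delta x /\ 0 <= cutf x.
Definition Delta_minus (x : 'rV[R]_n) : Prop := Delta x /\ 0 <= - cutf x.

(* index set [m]~ = [m] u {o}, encoded as option 'I_m with None = o *)
Definition Ht (j : option 'I_m) (x : 'rV[R]_n) : Prop :=
  match j with Some i => H i x | None => Ho x end.

Definition F (s : {set option 'I_m}) (x : 'rV[R]_n) : Prop :=
  Delta x /\ forall j, j \in s -> Ht j x.

Definition K_Delta (s : {set option 'I_m}) : Prop :=
  s = set0 \/ (None \notin s /\ exists x, forall j, j \in s -> Ht j x).

Definition K_plus (s : {set option 'I_m}) : Prop :=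
  s = set0 \/ exists x, Delta_plus x /\ forall j, j \in s -> Ht j x.

Definition K_minus (s : {set option 'I_m}) : Prop :=
  s = set0 \/ exists x, Delta_minus x /\ forall j, j \in s -> Ht j x.

Definition Z (s : {set option 'I_m}) : Prop :=
  (exists x, F s x) /\ forall x, F s x -> Delta_plus x /\ ~ Ho x.

End Cut.

Definition closure_cx (T : finType) (Zs : {set T} -> Prop) (t : {set T}) : Prop :=
  exists s, Zs s /\ t \subset s.

(* Main.v *)
Require Import Defs.
From mathcomp Require Import all_boot all_order all_algebra ring lra.
From Stdlib Require Import Classical.
Import Order.TTheory GRing.Theory Num.Theory.
Local Open Scope ring_scope.

Section Proofs.
Variables (R : realFieldType) (n m : nat).
Variables (lam : 'I_m -> 'rV[R]_n) (eta : 'I_m -> R) (lam0 : 'rV[R]_n) (xi : R).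

Lemma dotpDZ (x d v : 'rV[R]_n) t : dotp (x + t *: d) v = dotp x v + t * dotp d v.
Proof.
rewrite /dotp mulr_sumr -big_split; apply: eq_bigr => k _; by rewrite !mxE mulrDl mulrA.
Qed.

Lemma dotpB (x y v : 'rV[R]_n) : dotp (x - y) v = dotp x v - dotp y v.
Proof.
rewrite /dotp -sumrB; apply: eq_bigr => k _; rewrite !mxE; ring.
Qed.

Lemma dotpN (x v : 'rV[R]_n) : dotp (- x) v = - dotp x v.
Proof.
rewrite /dotp -sumrN; apply: eq_bigr => k _; rewrite !mxE; ring.
Qed.

Lemma ineqDZ i (x d : 'rV[R]_n) t :
  ineq lam eta i (x + t *: d) = ineq lam eta i x + t * dotp d (lam i).
Proof. rewrite /ineq dotpDZ; ring. Qed.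

Lemma ineqB i (x y : 'rV[R]_n) :
  dotp (x - y) (lam i) = ineq lam eta i x - ineq lam eta i y.
Proof. rewrite /ineq dotpB; ring. Qed.

Lemma cutfDZ (x d : 'rV[R]_n) t :
  cutf lam0 xi (x + t *: d) = cutf lam0 xi x + t * dotp d lam0.
Proof. rewrite /cutf dotpDZ; ring. Qed.

Lemma cutfB (x y : 'rV[R]_n) :
  dotp (x - y) lam0 = cutf lam0 xi x - cutf lam0 xi y.
Proof. rewrite /cutf dotpB; ring. Qed.

Lemma ex_min_seq (I : eqType) (f : I -> R) (s : seq I) :
  s != [::] -> exists2 i0, i0 \in s & forall j, j \in s -> f i0 <= f j.
Proof.
elim: s => [//|a s IH] _.
have [->|/IH [b bs Hb]] := eqVneq s [::].
  exists a; first by rewrite mem_seq1.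
  by move=> j; rewrite mem_seq1 => /eqP ->.
have [le|lt] := leP (f a) (f b).
  exists a; first by rewrite inE eqxx.
  move=> j; rewrite inE => /orP [/eqP -> //| /Hb]; exact: le_trans.
exists b; first by rewrite inE bs orbT.
move=> j; rewrite inE => /orP [/eqP -> | /Hb //]; exact: ltW.
Qed.

Lemma ex_minR (I : finType) (P : pred I) (f : I -> R) :
  (exists i, P i) -> exists i0, P i0 /\ forall j, P j -> f i0 <= f j.
Proof.
move=> [i Pi].
have : [seq j <- enum I | P j] != [::].
  apply/negP => /eqP E; have := mem_filter P i (enum I).
  by rewrite E Pi mem_enum in_nil.
case/(ex_min_seq _ f) => i0; rewrite mem_filter mem_enum andbT => Pi0 Hm.
exists i0; split => // j Pj; apply: Hm; by rewrite mem_filter mem_enum andbT.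
Qed.

Local Notation ineq := (ineq lam eta).
Local Notation cutf := (cutf lam0 xi).
Local Notation Delta := (Delta lam eta).

Lemma step_feas (x e : 'rV[R]_n) : Delta x ->
  (forall i, ineq i x = 0 -> dotp e (lam i) = 0) ->
  exists2 t, 0 < t & Delta (x + t *: e).
Proof.
move=> Dx Ha.
case: (classic (exists i, dotp e (lam i) < 0)) => [Hex|Hn].
  have [i0 [Pi0 Hm]] := @ex_minR _ (fun i => dotp e (lam i) < 0) (fun i => ineq i x / (- dotp e (lam i))) Hex.
  have apos i : dotp e (lam i) < 0 -> 0 < ineq i x.
    move=> hb; rewrite lt_neqAle Dx andbT; apply/eqP => h.
    by rewrite (Ha i (esym h)) ltxx in hb.
  set t := ineq i0 x / (- dotp e (lam i0)).
  have tpos : 0 < t.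
    by apply: divr_gt0; [exact: apos | rewrite oppr_gt0].
  exists t => // i; rewrite ineqDZ.
  have [hb|hb] := ltP (dotp e (lam i)) 0.
    have := Hm i hb; rewrite ler_pdivlMr ?oppr_gt0 // -/t mulrN => h; lra.
  by apply: addr_ge0; [exact: Dx | apply: mulr_ge0 => //; exact: ltW].
exists 1 => // i; rewrite ineqDZ mul1r; apply: addr_ge0; first exact: Dx.
by rewrite leNgt; apply/negP => h; apply: Hn; exists i.
Qed.

Lemma ray_step (z y : 'rV[R]_n) : bounded lam eta ->
  Delta z -> Delta y -> (forall i, ineq i z = 0 -> ineq i y = 0) -> cutf y < cutf z ->
  exists w, [/\ Delta w, cutf z < cutf w, (forall i, ineq i z = 0 -> ineq i w = 0)
     & exists i, ineq i z != 0 /\ ineq i w = 0].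
Proof.
move=> [M HM] Dz Dy Hzy Hc.
set d := z - y.
have hact i : ineq i z = 0 -> dotp d (lam i) = 0.
  by move=> h; rewrite /d ineqB h (Hzy i h) subrr.
have dpos : 0 < dotp d lam0 by rewrite /d cutfB subr_gt0.
case: (classic (exists i, dotp d (lam i) < 0)) => [Hex|Hn].
  have [i0 [Pi0 Hm]] := @ex_minR _ (fun i => dotp d (lam i) < 0)
      (fun i => ineq i z / (- dotp d (lam i))) Hex.
  have apos i : dotp d (lam i) < 0 -> 0 < ineq i z.
    move=> hb; rewrite lt_neqAle Dz andbT; apply/eqP => h.
    by rewrite (hact i (esym h)) ltxx in hb.
  set t := ineq i0 z / (- dotp d (lam i0)).
  have tpos : 0 < t.
    by apply: divr_gt0; [exact: apos | rewrite oppr_gt0].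
  exists (z + t *: d); split.
  - move=> i; rewrite ineqDZ.
    have [hb|hb] := ltP (dotp d (lam i)) 0.
      have := Hm i hb; rewrite ler_pdivlMr ?oppr_gt0 // -/t mulrN => h; lra.
    by apply: addr_ge0; [exact: Dz | apply: mulr_ge0 => //; exact: ltW].
  - rewrite cutfDZ ltrDl; exact: mulr_gt0.
  - by move=> i h; rewrite ineqDZ h (hact i h) mulr0 addr0.
  - exists i0; split; first by rewrite gt_eqF // apos.
    rewrite ineqDZ /t; field; by rewrite lt_eqF.
exfalso.
have [k dk] : exists k, d 0 k != 0.
  apply: NNPP => hk; move: dpos; rewrite /dotp big1 ?ltxx // => k _.
  have -> : d 0 k = 0 by apply/eqP/negPn/negP => h; apply: hk; exists k.
  by rewrite mul0r.
have Mge : 0 <= M by apply: le_trans (HM z Dz k).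
set t := (M + `|z 0 k| + 1) / `|d 0 k|.
have nd : 0 < `|d 0 k| by rewrite normr_gt0.
have tpos : 0 <= t by apply: divr_ge0 => //; have := normr_ge0 (z 0 k); lra.
have Dw : Delta (z + t *: d).
  move=> i; rewrite ineqDZ; apply: addr_ge0; first exact: Dz.
  by apply: mulr_ge0 => //; rewrite leNgt; apply/negP => h; apply: Hn; exists i.
have := HM _ Dw k.
have := ler_normB ((z + t *: d) 0 k) (z 0 k).
have -> : (z + t *: d) 0 k - z 0 k = t * d 0 k by rewrite !mxE; ring.
rewrite normrM ger0_norm // /t divfK ?gt_eqF //.
have := normr_ge0 (z 0 k); lra.
Qed.


Lemma gp_step (x : 'rV[R]_n) (S : 'I_m -> Prop) :
  cut_general_position lam eta lam0 xi ->
  Delta x -> cutf x = 0 -> (forall i, S i -> ineq i x = 0) ->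
  exists y, [/\ Delta y, 0 < cutf y & forall i, S i -> ineq i y = 0].
Proof.
move=> Hgp Dx cx HS.
apply: NNPP => Hno.
have claim e : (forall i, ineq i x = 0 -> dotp e (lam i) = 0) -> ~ 0 < dotp e lam0.
  move=> He hp; have [t tpos Dt] := @step_feas x e Dx He.
  apply: Hno; exists (x + t *: e); split => //.
    by rewrite cutfDZ cx add0r mulr_gt0.
  by move=> i /HS h; rewrite ineqDZ h (He i h) mulr0 addr0.
have key e : (forall i, ineq i x = 0 -> dotp e (lam i) = 0) -> dotp e lam0 = 0.
  move=> He; have [h|h|//] := ltgtP (dotp e lam0) 0.
    exfalso; apply: (claim (- e)); last by rewrite dotpN oppr_gt0.
    by move=> i /He; rewrite dotpN => ->; rewrite oppr0.
  by exfalso; apply: (claim e).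
apply: (Hgp x cx).
set B := \matrix_(i < m) (if ineq i x == 0 then lam i else 0).
have : (lam0 <= B)%MS.
  rewrite submxE; apply/eqP/matrixP => p j; rewrite ord1 !mxE.
  have He : forall i, ineq i x = 0 -> dotp (\row_k cokermx B k j) (lam i) = 0.
    move=> i hi.
    have := congr1 (fun M : 'M[R]_(m, n) => M i j) (mulmx_coker B); rewrite !mxE => <-.
    by apply: eq_bigr => k _; rewrite !mxE hi eqxx mulrC.
  apply: (etrans _ (key _ He)); rewrite /dotp.
  by apply: eq_bigr => k _; rewrite mulrC; congr (_ * _); rewrite !mxE.
case/submxP => D ->.
exists (fun i => D 0 i).
rewrite mulmx_sum_row [RHS]big_mkcond /=; apply: eq_bigr => i _.
by rewrite rowK; case: eqP => _; rewrite ?scaler0.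
Qed.


Lemma descent (S : 'I_m -> Prop) : bounded lam eta -> forall k (x : 'rV[R]_n),
  (#|[set i | ineq i x != 0%R]| < k)%N -> Delta x -> 0 < cutf x ->
  (forall i, S i -> ineq i x = 0) ->
  exists z, [/\ Delta z, 0 < cutf z, (forall i, S i -> ineq i z = 0) &
     forall y, Delta y -> (forall i, ineq i z = 0 -> ineq i y = 0) -> 0 < cutf y].
Proof.
move=> Hb; elim=> [x|k IH x]; first by rewrite ltn0.
move=> Hk Dx cx HS.
case: (classic (exists y, [/\ Delta y, (forall i, ineq i x = 0 -> ineq i y = 0) & cutf y <= 0])).
  case=> y [Dy Hy cy].
  have [w [Dw cw Hw [i0 [i0x i0w]]]] := @ray_step x y Hb Dx Dy Hy (le_lt_trans cy cx).
  apply: (IH w) => //.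
  - have : [set i | ineq i w != 0] \proper [set i | ineq i x != 0].
      apply/properP; split.
        apply/subsetP => i; rewrite !inE; apply: contra => /eqP /Hw ->; by [].
      by exists i0; rewrite !inE ?i0x ?i0w ?eqxx.
    move/proper_card => h; apply: leq_trans h _; by rewrite -ltnS.
  - exact: lt_trans cw.
  - by move=> i /HS /Hw.
move=> Hn; exists x; split => // y Dy Hy; rewrite ltNge; apply/negP => cy.
by apply: Hn; exists y.
Qed.

Lemma finish (S : 'I_m -> Prop) x : bounded lam eta ->
  cut_general_position lam eta lam0 xi ->
  Delta x -> 0 <= cutf x -> (forall i, S i -> ineq i x = 0) ->
  exists t, Z lam eta lam0 xi t /\ forall i, S i -> Some i \in t.
Proof.
move=> Hb Hgp Dx cx HS.
have [x1 [Dx1 cx1 HS1]] : exists y, [/\ Delta y, 0 < cutf y & forall i, S i -> ineq i y = 0].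
  move: cx; rewrite le_eqVlt => /orP [/eqP c0|cp].
    exact: (@gp_step x S Hgp Dx (esym c0) HS).
  by exists x.
have hk : (#|[set i | ineq i x1 != 0%R]| < m.+1)%N.
  by apply: leq_ltn_trans (max_card _) _; rewrite card_ord ltnSn.
have [z [Dz cz HSz Hz]] := @descent S Hb m.+1 x1 hk Dx1 cx1 HS1.
exists [set j : option 'I_m | if j is Some i then ineq i z == 0 else false].
split; last by move=> i /HSz h; rewrite inE h eqxx.
split.
  exists z; split => // j; rewrite inE; case: j => [i|//] /eqP h; by split.
move=> y [Dy Hy].
have cy : 0 < cutf y.
  apply: Hz => // i h.
  have : Some i \in [set j : option 'I_m | if j is Some i then ineq i z == 0 else false].
    by rewrite inE h eqxx.
  by move/Hy => [].
split; first by split => //; exact: ltW.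
by move=> [_ c]; rewrite c ltxx in cy.
Qed.

End Proofs.

Theorem lemma3p10 (R : realFieldType) (n m : nat)
    (lam : 'I_m -> 'rV[R]_n) (eta : 'I_m -> R) (lam0 : 'rV[R]_n) (xi : R) :
  simple_polytope lam eta ->
  facets_nonempty lam eta ->
  generic_cut lam eta lam0 xi ->
  (forall s : {set option 'I_m},
      (K_plus lam eta lam0 xi s /\ K_Delta lam eta lam0 xi s) <->
      closure_cx (Z lam eta lam0 xi) s) /\
  (forall s : {set option 'I_m},
      ((K_plus lam eta lam0 xi s \/ K_Delta lam eta lam0 xi s) /\
        ~ K_minus lam eta lam0 xi s) <->
      Z lam eta lam0 xi s).
Proof.
move=> [Hb _] _ [Hgp [x0 [Dx0 cx0]]].
have HtD : forall (j : option 'I_m) x, Ht lam eta lam0 xi j x -> Delta lam eta x.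
  by case=> [i|] x [].
split=> s; split.
- move=> [Hp Hd].
  have Nn : None \notin s.
    by case: Hd => [->|[]//]; rewrite inE.
  have [x [Dx cx Hx]] : exists x, [/\ Delta lam eta x, 0 <= cutf lam0 xi x &
      forall j, j \in s -> Ht lam eta lam0 xi j x].
    case: Hp => [->|[x [[Dx cx] Hx]]].
      by exists x0; split => //; [rewrite cx0 | move=> j; rewrite inE].
    by exists x.
  have [t [Zt St]] := @finish R n m lam eta lam0 xi (fun i => Some i \in s) x Hb Hgp Dx cx
    (fun i h => (Hx _ h).2).
  exists t; split => //; apply/subsetP; case=> [i /St //|].
  by move=> h; rewrite h in Nn.
- move=> [t [[[x [Dx Hx]] Ht'] st]].
  have [[Dx' cx] nHo] := Ht' x (conj Dx Hx).
  have Hs : forall j, j \in s -> Ht lam eta lam0 xi j x.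
    by move=> j js; apply: Hx; apply: (subsetP st).
  split; right.
    by exists x; split => //.
  split; last by exists x.
  by apply/negP => /Hs.
- move=> [Hpd Hm].
  have s0 : s != set0 by apply/eqP => e; apply: Hm; left.
  have [x [Dx Hx]] : exists x, F lam eta lam0 xi s x.
    case: Hpd => [[e|[x [[Dx _] Hx]]]|[e|[_ [x Hx]]]].
    + by rewrite e eqxx in s0.
    + by exists x.
    + by rewrite e eqxx in s0.
    + case/set0Pn: s0 => j js; exists x; split => //; exact: (HtD j x (Hx j js)).
  split; first by exists x.
  move=> y [Dy Hy].
  have cy : 0 < cutf lam0 xi y.
    rewrite ltNge; apply/negP => c; apply: Hm; right; exists y; split => //.
    by split => //; rewrite oppr_ge0.
  split; first by split => //; exact: ltW.
  by move=> [_ c]; rewrite c ltxx in cy.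
- move=> [[x Fx] HZ].
  have [[Dx cx] _] := HZ x Fx.
  split; first by left; right; exists x; case: Fx => _ Hx; split => //; split.
  case=> [e|[y [[Dy cy] Hy]]].
    have Fx0 : F lam eta lam0 xi s x0 by split => // j; rewrite e inE.
    by apply: (HZ x0 Fx0).2; split.
  have [[_ cy'] nHo] := HZ y (conj Dy Hy).
  apply: nHo; split => //; apply/eqP; rewrite eq_le cy' andbT -oppr_ge0 //.
Qed.
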